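(* Consider the following process on a finite vertex set $V=\{1,\dots,p\}$. One maintains a list of cliques $[C_1,\dots,C_m]$ and a set of outstanding vertices $O=V\setminus\bigcup_i C_i$; the associated graph $G$ on $V$ has an edge between two distinct vertices iff they lie in a common $C_i$. Initially the list is a given list of nonempty subsets (for instance a single nonempty subset), and the vertices of $\bigcup_i C_i$ are listed in an order $u_1,\dots,u_r$ whose reverse $[u_r,\dots,u_1]$ is a perfect elimination order of the graph induced by the initial cliques. While $O\ne\emptyset$, a step chooses a clique $C_a$ in the list, a vertex $v\in O$ and a subset $S\subseteq C_a$, and then: if $S$ is a nonempty proper subset of $C_a$, the clique $S\cup\{v\}$ is added to the list; if $S=C_a$, $C_a$ is replaced by $C_a\cup\{v\}$; if $S=\emptyset$, the clique $\{v\}$ is added; finally $v$ is removed from $O$. Let $u_{r+1},\dots,u_p$ be the vertices in the order in which they are added. Then, for any such sequence of choices, $[u_p,u_{p-1},\dots,u_1]$ is a perfect elimination order of the final graph $G$; i.e. the process adds vertices in reverse perfect elimination order.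
   Context: For a graph $G$ on $n$ vertices and an ordering $[v_1,\dots,v_n]$ of its vertices, let $G_i$ be the subgraph induced by $\{v_i,\dots,v_n\}$. The ordering is a perfect elimination order if for every $i$ the set of neighbours of $v_i$ lying in $G_{i+1}$ is complete (pairwise adjacent) in $G_{i+1}$, i.e. $v_i$ is simplicial in $G_i$. *)

(* Defs.v *)
From mathcomp Require Import all_boot.
Set Implicit Arguments. Unset Strict Implicit. Unset Printing Implicit Defensive.

Section CliqueProcess.
Variable T : finType.

Definition cover_list (cs : seq {set T}) : {set T} := \bigcup_(C <- cs) C.

Definition clique_graph (cs : seq {set T}) : rel T :=
  fun x y => (x != y) && has (fun C : {set T} => (x \in C) && (y \in C)) cs.

Definition is_peo (V : {set T}) (e : rel T) (s : seq T) : Prop :=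
  [/\ uniq s, [set x in s] = V &
      forall s1 v s2, s = s1 ++ v :: s2 ->
        forall x y, x \in s2 -> y \in s2 -> x != y ->
          e v x -> e v y -> e x y].

Definition update (cs : seq {set T}) (a : nat) (v : T) (S : {set T}) :=
  let C := nth set0 cs a in
  if S == set0 then rcons cs [set v]
  else if S == C then set_nth set0 cs a (C :|: [set v])
  else rcons cs (v |: S).

(* one step of the process; the state is (clique list, vertices in order
   of addition). v must be outstanding, i.e. not in the union of cliques. *)
Inductive step : seq {set T} * seq T -> seq {set T} * seq T -> Prop :=
| Step cs ord a v (S : {set T}) :
    a < size cs -> v \notin cover_list cs -> S \subset nth set0 cs a ->
    step (cs, ord) (update cs a v S, rcons ord v).

Inductive reach : seq {set T} * seq T -> seq {set T} * seq T -> Prop :=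
| reach_refl st : reach st st
| reach_step st1 st2 st3 : step st1 st2 -> reach st2 st3 -> reach st1 st3.

End CliqueProcess.

(* Main.v *)
Require Import Defs.
From mathcomp Require Import all_boot.
Set Implicit Arguments. Unset Strict Implicit. Unset Printing Implicit Defensive.

Section S.
Variable T : finType.
Implicit Types (cs : seq {set T}) (v x y : T).

Lemma in_cover x cs : (x \in cover_list cs) = has (fun C : {set T} => x \in C) cs.
Proof.
rewrite /cover_list; elim: cs => [|C cs IH]; first by rewrite big_nil inE.
by rewrite big_cons in_setU IH.
Qed.

Definition good cs cs' v (C : {set T}) :=
  [/\ C \in cs,
      forall x, (x \in cover_list cs') = (x == v) || (x \in cover_list cs),
      forall x y, x != v -> y != v ->
        has (fun D : {set T} => (x \in D) && (y \in D)) cs' = has (fun D : {set T} => (x \in D) && (y \in D)) cs &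
      forall x, clique_graph cs' v x -> x \in C].

Lemma goodA cs v (C N : {set T}) : v \notin cover_list cs -> C \in cs -> v \in N -> N \subset v |: C ->
  good cs (rcons cs N) v C.
Proof.
move=> hv hC hN hNC; rewrite in_cover in hv; split => //.
- move=> x; rewrite !in_cover has_rcons.
  case: (eqVneq x v) => [->|xv] /=; first by rewrite hN.
  case xN: (x \in N) => //=; apply/esym/hasP; exists C => //.
  by move/subsetP: hNC => /(_ x xN); rewrite in_setU1 (negbTE xv).
- move=> x y xv yv; rewrite has_rcons.
  case xN: (x \in N); case yN: (y \in N) => //=; apply/esym/hasP; exists C => //.
  move/subsetP: hNC => h.
  by move: (h x xN) (h y yN); rewrite !in_setU1 (negbTE xv) (negbTE yv) /= => -> ->.
- move=> x /andP [vx]; rewrite has_rcons => /orP [/andP [_ xN]|h].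
    by move/subsetP: hNC => /(_ x xN); rewrite in_setU1 eq_sym (negbTE vx).
  by case/negP: hv; apply: sub_has h => D /andP [].
Qed.

Lemma goodB (l1 l2 : seq {set T}) v (C : {set T}) : v \notin cover_list (l1 ++ C :: l2) ->
  good (l1 ++ C :: l2) (l1 ++ (v |: C) :: l2) v C.
Proof.
move=> hv; rewrite in_cover has_cat /= negb_or negb_or in hv.
case/and3P: hv => h1 hC h2; split.
- by rewrite mem_cat in_cons eqxx orbT.
- move=> x; rewrite !in_cover !has_cat /= in_setU1.
  case: (eqVneq x v) => [->|xv] /=; last by [].
  by rewrite orbT.
- move=> x y xv yv; rewrite !has_cat /= !in_setU1 (negbTE xv) (negbTE yv) //.
- move=> x /andP [vx]; rewrite has_cat /= in_setU1 eqxx /= => /orP [h|/orP [h|h]].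
  + by case/negP: h1; apply: sub_has h => D /andP [].
  + by rewrite in_setU1 eq_sym (negbTE vx) in h.
  + by case/negP: h2; apply: sub_has h => D /andP [].
Qed.

Lemma good_update cs a v (S : {set T}) : a < size cs -> v \notin cover_list cs ->
  S \subset nth set0 cs a -> good cs (update cs a v S) v (nth set0 cs a).
Proof.
move=> ha hv hS; have hC : nth set0 cs a \in cs by apply: mem_nth.
rewrite /update; case: ifP => [_|S0].
  apply: goodA => //; first by rewrite inE.
  by rewrite sub1set in_setU1 eqxx.
case: ifP => [/eqP SC|SC].
  have E : cs = take a cs ++ nth set0 cs a :: drop a.+1 cs by rewrite -drop_nth // cat_take_drop.
  rewrite set_nthE ha setUC.
  by have := @goodB (take a cs) (drop a.+1 cs) v (nth set0 cs a); rewrite -E; apply.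
apply: goodA => //; first by rewrite in_setU1 eqxx.
by apply: setUS.
Qed.

Lemma good_peo cs cs' v (C : {set T}) (ord : seq T) : good cs cs' v C -> v \notin cover_list cs ->
  is_peo (cover_list cs) (clique_graph cs) (rev ord) ->
  is_peo (cover_list cs') (clique_graph cs') (rev (rcons ord v)).
Proof.
case=> hC F1 F2 F3 hv [hu hset hpeo].
have memo x : (x \in rev ord) = (x \in cover_list cs).
  by rewrite -hset inE.
have nv x : x \in rev ord -> x != v.
  by move=> hx; apply/eqP => e; move: hx; rewrite memo e (negbTE hv).
have E2 x y : x != v -> y != v -> clique_graph cs' x y = clique_graph cs x y.
  by move=> xv yv; rewrite /clique_graph F2.
rewrite rev_rcons; split.
- by rewrite /= hu andbT memo.
- by apply/setP => x; rewrite inE in_cons F1 memo.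
move=> [|z s1] w s2 /=.
  case=> <- <- x y hx hy xy evx evy.
  rewrite E2 ?nv //; rewrite /clique_graph xy /=; apply/hasP; exists C => //.
  by rewrite (F3 _ evx) (F3 _ evy).
case=> _ E x y hx hy xy ewx ewy.
have hw : w \in rev ord by rewrite E mem_cat in_cons eqxx orbT.
have hx' : x \in rev ord by rewrite E mem_cat in_cons hx !orbT.
have hy' : y \in rev ord by rewrite E mem_cat in_cons hy !orbT.
move: ewx ewy; rewrite (E2 w x) ?(E2 w y) ?(E2 x y) ?nv // => ewx ewy.
exact: (hpeo _ _ _ E x y hx hy xy ewx ewy).
Qed.

Lemma step_peo (st st' : seq {set T} * seq T) : step st st' ->
  is_peo (cover_list st.1) (clique_graph st.1) (rev st.2) ->
  is_peo (cover_list st'.1) (clique_graph st'.1) (rev st'.2).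
Proof.
case=> cs ord a v S ha hv hS /=; apply: good_peo (good_update ha hv hS) hv.
Qed.

Lemma reach_peo (st st' : seq {set T} * seq T) : reach st st' ->
  is_peo (cover_list st.1) (clique_graph st.1) (rev st.2) ->
  is_peo (cover_list st'.1) (clique_graph st'.1) (rev st'.2).
Proof.
elim=> [//|s1 s2 s3 h _ IH] H; apply: IH; exact: step_peo h H.
Qed.
End S.

Theorem theorem15 (T : finType) (cs0 : seq {set T}) (ord0 : seq T)
    (cs : seq {set T}) (ord : seq T) :
  all (fun C : {set T} => C != set0) cs0 ->
  is_peo (cover_list cs0) (clique_graph cs0) (rev ord0) ->
  reach (cs0, ord0) (cs, ord) ->
  cover_list cs = [set: T] ->
  is_peo [set: T] (clique_graph cs) (rev ord).
Proof.
move=> _ H R E; rewrite -E.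
exact: (reach_peo R H).
Qed.
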